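(* For any history $\mathcal{F}_{t-1}$, conditioned on the event $E^{\widetilde f}(t)$, \[ \mathbb{P}\big(\mathbf{x}_t\in\mathcal{X}\setminus S_t\mid\mathcal{F}_{t-1}\big)\ge p-1/t^2,\qquad p=\frac{1}{4e\sqrt\pi}. \]
   Context: $\mathcal{X}$ finite subset of the unit ball of $\mathbb{R}^d$; $f\sim\mathcal{GP}(0,k)$, $k$ the exact NTK with $k\le K_0$, $|f|\le B'$; noise $\mathcal{N}(0,\sigma^2)$; $\delta\in(0,1)$, horizon $T$; $\mathbf{x}^*$ maximizes $f$, $\Delta(\mathbf{x})=f(\mathbf{x}^* )-f(\mathbf{x})$. $\widetilde k$ is the empirical NTK (gradient inner product of a network with $L+1$ layers at initialization) with $|\widetilde k-k|\le(L+1)\varepsilon$ on $\mathcal{X}\times\mathcal{X}$, $(L+1)\varepsilon\le1$, $\sigma^2\le1$, $\hat K_0=\max\{1,K_0\}$. $\beta_t=2\log(2\pi^2t^2|\mathcal{X}|/(3\delta))$, $c_t=\beta_t(1+\sqrt{2\log(|\mathcal{X}|t^2)})$. Queries indexed sequentially; $\mathrm{fb}[t]$ largest index observed when $\mathbf{x}_t$ is chosen ($t-\mathrm{fb}[t]\le B$); $\mathcal{F}_{t-1}$ the history. $\widetilde\mu_{\mathrm{fb}[t]},\widetilde\sigma_{\mathrm{fb}[t]}$: GP posterior mean/std with kernel $\widetilde k$ given observations $1,\dots,\mathrm{fb}[t]$; given $\mathcal{F}_{t-1}$, $\widetilde f_t\sim\mathcal{GP}(\widetilde\mu_{\mathrm{fb}[t]},\beta_t^2\widetilde\sigma^2_{\mathrm{fb}[t]})$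 and $\mathbf{x}_t=\arg\max_{\mathbf{x}}\widetilde f_t(\mathbf{x})$. $\epsilon_{m,t}=2\hat K_0\frac{t^2(L+1)\varepsilon}{\sigma^4}(B'+\sigma\sqrt{2\log(4T/\delta)})+\beta_t\sqrt{(L+1)\varepsilon(1+4\hat K_0^2t^2/\sigma^4)}$. $E^{\widetilde f}(t)$: $|\widetilde\mu_{\mathrm{fb}[t]}(\mathbf{x})-f(\mathbf{x})|\le\beta_t\widetilde\sigma_{\mathrm{fb}[t]}(\mathbf{x})+\epsilon_{m,t}$ for all $\mathbf{x}$. Saturated set: $S_t=\{\mathbf{x}\in\mathcal{X}:\Delta(\mathbf{x})>c_t\widetilde\sigma_{\mathrm{fb}[t]}(\mathbf{x})+2\epsilon_{m,t}\}$. *)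

(* Defs.v *)
From HB Require Import structures.
From mathcomp Require Import all_boot all_order all_algebra.
From mathcomp Require Import all_classical all_reals all_analysis.
Set Implicit Arguments. Unset Strict Implicit. Unset Printing Implicit Defensive.
Import Order.TTheory GRing.Theory Num.Theory.
Local Open Scope classical_set_scope.
Local Open Scope ring_scope.

Section Defs.
Context {R : realType}.

Definition gauss_law (m v : R) : set R -> \bar R :=
  if v == 0 then dirac m else normal_prob m (Num.sqrt v).

Definition is_normal_rv {dO} {Omega : measurableType dO}
  (P : probability Omega R) (Y : Omega -> R) (m v : R) : Prop :=
  measurable_fun setT Y /\
  forall A : set R, measurable A -> P (Y @^-1` A) = gauss_law m v A.

(** A random function [F] on a finite index set [X] is distributed as
    GP(m, C): every linear combination of its values is Gaussian with the
    corresponding mean and variance (i.e. (F x)_x is multivariate normal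
    with mean vector m and covariance matrix C). *)
Definition is_gp {X : finType} {dO} {Omega : measurableType dO}
  (P : probability Omega R) (F : Omega -> X -> R)
  (m : X -> R) (C : X -> X -> R) : Prop :=
  forall a : X -> R,
    is_normal_rv P (fun w => \sum_(x : X) a x * F w x)
      (\sum_(x : X) a x * m x)
      (\sum_(x : X) \sum_(y : X) a x * a y * C x y).

(** Empirical NTK: inner product of the gradient feature maps [g]. *)
Definition ntk_emp {X : Type} {np : nat} (g : X -> 'rV[R]_np) (x y : X) : R :=
  \sum_(i < np) g x 0 i * g y 0 i.

Definition post_Kinv {X : Type} (k : X -> X -> R) (s2 : R) {n : nat}
  (xs : 'I_n -> X) : 'M[R]_n :=
  invmx (\matrix_(i, j) k (xs i) (xs j) + s2%:M).

Definition post_mean {X : Type} (k : X -> X -> R) (s2 : R) {n : nat}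
  (xs : 'I_n -> X) (ys : 'I_n -> R) (x : X) : R :=
  \sum_(i < n) \sum_(j < n) k x (xs i) * post_Kinv k s2 xs i j * ys j.

Definition post_cov {X : Type} (k : X -> X -> R) (s2 : R) {n : nat}
  (xs : 'I_n -> X) (x y : X) : R :=
  k x y - \sum_(i < n) \sum_(j < n) k x (xs i) * post_Kinv k s2 xs i j * k (xs j) y.

Definition post_sd {X : Type} (k : X -> X -> R) (s2 : R) {n : nat}
  (xs : 'I_n -> X) (x : X) : R :=
  Num.sqrt (post_cov k s2 xs x x).

Definition beta_t (cardX : nat) (delta : R) (t : nat) : R :=
  2 * ln (2 * pi ^+ 2 * (t%:R) ^+ 2 * cardX%:R / (3 * delta)).

Definition c_t (cardX : nat) (delta : R) (t : nat) : R :=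
  beta_t cardX delta t * (1 + Num.sqrt (2 * ln (cardX%:R * (t%:R) ^+ 2))).

Definition eps_mt (cardX : nat) (delta : R) (t T : nat) (K0 : R) (L : nat)
  (eps Bp sigma : R) : R :=
  let K0h := Num.max 1 K0 in
  2 * K0h * ((t%:R) ^+ 2 * (L.+1)%:R * eps / sigma ^+ 4)
    * (Bp + sigma * Num.sqrt (2 * ln (4 * T%:R / delta)))
  + beta_t cardX delta t
    * Num.sqrt ((L.+1)%:R * eps * (1 + 4 * K0h ^+ 2 * (t%:R) ^+ 2 / sigma ^+ 4)).

Definition p_const : R := 1 / (4 * expR 1 * Num.sqrt pi).

End Defs.

(* Main.v *)
Require Import Defs.
From HB Require Import structures.
From mathcomp Require Import all_boot all_order all_algebra.
From mathcomp Require Import all_classical all_reals all_analysis.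
From mathcomp Require Import ring lra measurable_realfun normal_distribution.
Import Order.TTheory GRing.Theory Num.Theory.
Local Open Scope classical_set_scope.
Local Open Scope ring_scope.

Lemma normal0_itv (R : realType) (m a b : R) : 0 <= a -> a <= b -> b <= 1 ->
  normal_prob m 0 `[a, b] = (b - a)%:E.
Proof.
move=> a0 ab b1.
rewrite /normal_prob /normal_pdf eqxx.
rewrite integral_indic//=.
rewrite setIidr; last first.
  move=> x /=; rewrite !in_itv/= => /andP[h1 h2]; apply/andP; split.
  exact: le_trans h1. exact: le_trans b1.
rewrite lebesgue_measure_itv/= lte_fin.
case: ltP => [_|]; first by rewrite EFinB.
rewrite le_eqVlt => /orP[/eqP->|h]; first by rewrite subrr.
by exfalso; move: (le_lt_trans ab h); rewrite ltxx.
Qed.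

Lemma normal_var_ge0 (R : realType) dO (Omega : measurableType dO)
  (P : probability Omega R) (Y : Omega -> R) (m v : R) :
  is_normal_rv P Y m v -> is_normal_rv P (fun w => 2 * Y w) (2 * m) (4 * v) ->
  0 <= v.
Proof.
move=> [_ H1] [_ H2].
rewrite leNgt; apply/negP => v0.
have vn0 : v != 0 by rewrite lt_eqF.
have v4 : 4 * v < 0 by rewrite pmulr_rlt0.
have v4n0 : 4 * v != 0 by rewrite lt_eqF.
have e1 := H1 `[0, 1/2]%classic (measurable_itv _).
have e2 := H2 `[0, 1]%classic (measurable_itv _).
rewrite /gauss_law (negbTE vn0) ltr0_sqrtr // in e1.
rewrite /gauss_law (negbTE v4n0) ltr0_sqrtr // in e2.
rewrite normal0_itv // in e1; last by rewrite ler_pdivrMr // mul1r ler1n.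
rewrite normal0_itv // in e2.
have Heq : (fun w => 2 * Y w) @^-1` `[0, 1] = Y @^-1` `[0, 1/2].
  apply/seteqP; split => w /=; rewrite !in_itv/= => /andP[h1 h2]; apply/andP; split.
  1-4: lra.
rewrite Heq e1 in e2.
move: e2 => /(congr1 fine) /=; lra.
Qed.

Lemma normal_dom (R : realType) (m a s K : R) (I : set R) : measurable I -> 0 <= K ->
  (forall x, I x -> normal_pdf m s x <= K * normal_pdf a s x) ->
  (normal_prob m s I <= K%:E)%E.
Proof.
move=> mI K0 H.
apply: (@le_trans _ _ (K%:E * normal_prob a s I)%E); last first.
  rewrite -[leRHS]mule1; apply: lee_pmul => //.
  exact: probability_le1.
rewrite /normal_prob -ge0_integralZl_EFin //; last first.
- by apply/measurable_EFinP; apply: measurable_funS (measurable_normal_pdf a s).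
- by move=> x _; rewrite lee_fin normal_pdf_ge0.
apply: ge0_le_integral => //.
- by move=> x _; rewrite lee_fin normal_pdf_ge0.
- by apply/measurable_EFinP; apply: measurable_funS (measurable_normal_pdf m s).
- apply: (@measurable_funeM _ _ _ _ (fun x => (normal_pdf a s x)%:E)).
  by apply/measurable_EFinP; apply: measurable_funS (measurable_normal_pdf a s).
Qed.

Lemma normal_upper_tail (R : realType) dO (Omega : measurableType dO)
  (P : probability Omega R) (Y : Omega -> R) (m v c : R) :
  is_normal_rv P Y m v -> 0 <= v -> 0 <= c ->
  (P [set w | (m + c * Num.sqrt v < Y w)%R] <= (expR (- (c ^+ 2) / 2))%:E)%E.
Proof.
move=> [_ H] v0 c0.
set a := m + c * Num.sqrt v.
have -> : [set w | a < Y w] = Y @^-1` `]a, +oo[%classic.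
  by apply/seteqP; split => w /=; rewrite in_itv/= andbT.
rewrite H; last exact: measurable_itv.
rewrite /gauss_law; have [v00|vn0] := eqVneq v 0.
  rewrite diracE /a v00 sqrtr0 mulr0 addr0.
  rewrite (_ : _ \in _ = false) ?lee_fin ?expR_ge0 //.
  by apply/negbTE/negP; rewrite inE /= in_itv /= ltxx.
set s := Num.sqrt v.
have s0 : 0 < s by rewrite sqrtr_gt0 lt_neqAle eq_sym vn0 v0.
apply: (@normal_dom R m a s) => //.
move=> x /=; rewrite in_itv/= andbT /a -/s => hx.
rewrite /normal_pdf /= gt_eqF // /normal_fun mulrCA ler_pM2l ?normal_peak_gt0 ?gt_eqF //.
rewrite -expRD ler_expR -subr_ge0.
have -> : - c ^+ 2 / 2 + - (x - (m + c * s)) ^+ 2 / (s ^+ 2 *+ 2) - - (x - m) ^+ 2 / (s ^+ 2 *+ 2)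
   = c * (x - (m + c * s)) / s.
  by field; rewrite gt_eqF.
by apply: divr_ge0; [apply: mulr_ge0 => //; rewrite subr_ge0; exact: ltW | exact: ltW].
Qed.

Lemma pconst_le (R : realType) (s : R) : 0 < s ->
  p_const <= normal_peak s * expR (- (9 / 8)) * (s / 2).
Proof.
move=> s0.
have Q0 : 0 < Num.sqrt (pi : R) by rewrite sqrtr_gt0 pi_gt0.
have r20 : 0 < Num.sqrt (2 : R) by rewrite sqrtr_gt0.
have r2sq : Num.sqrt (2 : R) ^+ 2 = 2 by rewrite sqr_sqrtr.
have E0 : 0 < expR (1 : R) by apply: expR_gt0.
have hs : Num.sqrt (s ^+ 2 * pi *+ 2) = s * Num.sqrt 2 * Num.sqrt pi.
  rewrite -mulr_natr -mulrA sqrtrM ?sqr_ge0 // sqrtr_sqr gtr0_norm // sqrtrM ?(ltW (pi_gt0 _)) //.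
  by rewrite [Num.sqrt pi * _]mulrC mulrA.
have y78 : 7 / 8 <= expR (- (1 / 8) : R).
  by apply: le_trans (expR_ge1Dx _); lra.
have hy : expR (- (9 / 8) : R) = (expR 1)^-1 * expR (- (1 / 8)).
  by rewrite -expRN -expRD; congr expR; lra.
rewrite /normal_peak hs hy /p_const.
set y := expR (- (1 / 8)).
rewrite -subr_ge0.
have -> : (s * Num.sqrt 2 * Num.sqrt pi)^-1 * ((expR 1)^-1 * y) * (s / 2) -
   1 / (4 * expR 1 * Num.sqrt pi) = (2 * y - Num.sqrt 2) / (4 * Num.sqrt 2 * Num.sqrt pi * expR 1).
  by field; rewrite !gt_eqF.
apply: divr_ge0; last by rewrite !mulr_ge0 // ltW.
have h74 : Num.sqrt (2:R) <= 7/4.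
  rewrite -subr_ge0. have -> : 7/4 - Num.sqrt (2:R) = (49/16 - Num.sqrt 2 ^+ 2) / (7/4 + Num.sqrt 2) by field; rewrite gt_eqF //; lra.
  rewrite r2sq divr_ge0 //; lra.
rewrite /y; lra.
Qed.

Lemma pconst_le1 (R : realType) : p_const <= 1 :> R.
Proof.
have Q1 : 1 <= Num.sqrt (pi : R).
  by rewrite -sqrtr1; apply: ler_wsqrtr; have := pi_ge2 R; lra.
have E1 : 2 <= expR (1 : R) by apply: le_trans (expR_ge1Dx _); lra.
rewrite /p_const ler_pdivrMr; last by rewrite !mulr_gt0 //; lra.
rewrite mul1r; nra.
Qed.

Lemma normal_lower (R : realType) dO (Omega : measurableType dO)
  (P : probability Omega R) (Y : Omega -> R) (m v : R) :
  is_normal_rv P Y m v -> 0 <= v ->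
  (p_const%:E <= P [set w | (m + Num.sqrt v <= Y w)%R])%E.
Proof.
move=> [_ H] v0.
set a := m + Num.sqrt v.
have -> : [set w | a <= Y w] = Y @^-1` `[a, +oo[%classic.
  by apply/seteqP; split => w /=; rewrite in_itv/= andbT.
rewrite H; last exact: measurable_itv.
rewrite /gauss_law; have [v00|vn0] := eqVneq v 0.
  rewrite diracE /a v00 sqrtr0 addr0.
  rewrite (_ : _ \in _ = true) ?lee_fin ?pconst_le1 //.
  by apply/mem_set; rewrite /= in_itv /= lexx.
set s := Num.sqrt v.
have s0 : 0 < s by rewrite sqrtr_gt0 lt_neqAle eq_sym vn0 v0.
apply: (@le_trans _ _ ((normal_peak s * expR (- (9 / 8)) * (s / 2))%:E)); first by rewrite lee_fin pconst_le.
apply: (@le_trans _ _ (normal_prob m s `[a, a + s / 2]%classic)); last first.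
  apply: le_measure; rewrite ?inE; try exact: measurable_itv.
  by move=> x /=; rewrite !in_itv /= => /andP[-> _].
have mI : measurable (`[a, a + s / 2]%classic : set R) by exact: measurable_itv.
have -> : ((normal_peak s * expR (- (9 / 8)) * (s / 2))%:E =
   \int[lebesgue_measure]_(x in `[a, (a + s / 2)%R]%classic) (cst (normal_peak s * expR (- (9 / 8)))%:E) x)%E.
  rewrite integral_cst //.
  have hl := @lebesgue_measure_itv R `[a, (a + s / 2)%R].
  rewrite /= lte_fin ifT in hl; last by rewrite ltrDl divr_gt0.
  rewrite EFinM; congr (_ * _)%E; symmetry; etransitivity; first exact: hl.
  by rewrite -EFinB addrAC subrr add0r.
apply: ge0_le_integral => //.
- by move=> x _; rewrite lee_fin mulr_ge0 ?normal_peak_ge0 ?expR_ge0.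
- by apply/measurable_EFinP; apply: measurable_funS (measurable_normal_pdf m s).
move=> x /=; rewrite in_itv /= /a -/s => /andP[h1 h2].
rewrite lee_fin /normal_pdf /= gt_eqF // /normal_fun ler_pM2l ?normal_peak_gt0 ?gt_eqF //.
rewrite ler_expR mulNr lerN2 ler_pdivrMr; last by rewrite pmulrn_rgt0 // exprn_gt0.
rewrite mulr2n; nra.
Qed.

Lemma bigU_mem (T : Type) (I : eqType) (S : I -> set T) (s : seq I) (w : T) :
  (\big[setU/set0]_(x <- s) S x) w <-> exists2 x, x \in s & S x w.
Proof.
elim: s => [|a s IH]; rewrite ?big_nil ?big_cons.
  by split => // -[].
split.
  case => [h|/IH [x xs h]]; first by exists a; rewrite ?inE ?eqxx.
  by exists x; rewrite // inE xs orbT.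
move=> [x]; rewrite inE => /orP[/eqP -> h|xs h]; first by left.
by right; apply/IH; exists x.
Qed.

Lemma measure_bigU_le (R : realType) dO (Omega : measurableType dO)
  (P : probability Omega R) (I : Type) (Bs : I -> set Omega) (s : seq I) :
  (forall x, measurable (Bs x)) ->
  (P (\big[setU/set0]_(x <- s) Bs x) <= \sum_(x <- s) P (Bs x))%E.
Proof.
move=> mB; elim: s => [|a s IH]; first by rewrite !big_nil measure0.
rewrite !big_cons; apply: le_trans (measureU2 _ _ _) _ => //.
  by apply: bigsetU_measurable.
exact: leeD2l.
Qed.

Lemma gp_marg (R : realType) (X : finType) dO (Omega : measurableType dO)
  (P : probability Omega R) (F : Omega -> X -> R) (m : X -> R) (C : X -> X -> R) :
  is_gp P F m C -> forall (r : R) (x : X),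
  is_normal_rv P (fun w => r * F w x) (r * m x) (r ^+ 2 * C x x).
Proof.
move=> H r x.
have := H (fun y => if y == x then r else 0).
have sum1 : forall h : X -> R, \sum_(y : X) (if y == x then r else 0) * h y = r * h x.
  move=> h; rewrite (bigD1 x) //= eqxx big1 ?addr0 // => y /negbTE ->.
  by rewrite mul0r.
have inner : forall y, \sum_(z : X) (if y == x then r else 0) * (if z == x then r else 0) * C y z = (if y == x then r else 0) * (r * C y x).
  move=> y; rewrite (bigD1 x) //= eqxx big1 ?addr0 ?mulrA //.
  by move=> z /negbTE ->; rewrite mulr0 mul0r.
have ds : \sum_(y : X) \sum_(z : X) (if y == x then r else 0) * (if z == x then r else 0) * C y z = r ^+ 2 * C x x.
  under eq_bigr => y _ do rewrite inner.
  by rewrite (sum1 (fun y => r * C y x)) expr2 mulrA.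
rewrite ds sum1.
have -> : (fun w => \sum_(y : X) (if y == x then r else 0) * F w y) = (fun w => r * F w x).
  by apply: funext => w; rewrite sum1.
done.
Qed.
Arguments normal_var_ge0 {R dO Omega P Y m v}.
Arguments normal_upper_tail {R dO Omega P Y m v c}.
Arguments normal_lower {R dO Omega P Y m v}.
Arguments measure_bigU_le {R dO Omega P I Bs s}.

Theorem lemma15
  (R : realType)
  (* finite domain X, embedded injectively in the unit ball of R^d *)
  (d : nat) (X : finType) (emb : X -> 'rV[R]_d)
  (emb_inj : injective emb)
  (emb_ball : forall x, \sum_(i < d) emb x 0 i ^+ 2 <= 1)
  (* exact NTK k, bounded by K0 *)
  (k : X -> X -> R) (K0 : R) (k_le : forall x y, k x y <= K0)
  (* empirical NTK = gradient inner product of the network at init *)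
  (np : nat) (g : X -> 'rV[R]_np) (L : nat) (eps : R)
  (eps_ge0 : 0 <= eps)
  (k_close : forall x y, `|ntk_emp g x y - k x y| <= (L.+1)%:R * eps)
  (Leps_le1 : (L.+1)%:R * eps <= 1)
  (* the unknown function f, bounded by B' *)
  (f : X -> R) (Bp : R) (f_bd : forall x, `|f x| <= Bp)
  (* noise level, confidence, horizon, batch delay *)
  (sigma : R) (sigma_gt0 : 0 < sigma) (sigma2_le1 : sigma ^+ 2 <= 1)
  (delta : R) (delta_gt0 : 0 < delta) (delta_lt1 : delta < 1)
  (T t fb B : nat) (t_ge1 : (1 <= t)%N) (t_leT : (t <= T)%N)
  (fb_lt : (fb < t)%N) (batch : (t - fb <= B)%N)
  (* the history: observations 1..fb[t] *)
  (xs : 'I_fb -> X) (ys : 'I_fb -> R)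
  (* maximizer of f *)
  (xstar : X) (xstar_max : forall x, f x <= f xstar)
  (* the event E^{f~}(t) *)
  (HE : forall x,
     `|post_mean (ntk_emp g) (sigma ^+ 2) xs ys x - f x|
       <= beta_t #|X| delta t * post_sd (ntk_emp g) (sigma ^+ 2) xs x
          + eps_mt #|X| delta t T K0 L eps Bp sigma)
  (* conditional law of the Thompson sample f~_t given F_{t-1} *)
  (dO : measure_display) (Omega : measurableType dO)
  (P : probability Omega R) (Ft : Omega -> X -> R)
  (Ft_law : is_gp P Ft (post_mean (ntk_emp g) (sigma ^+ 2) xs ys)
              (fun x y => beta_t #|X| delta t ^+ 2
                          * post_cov (ntk_emp g) (sigma ^+ 2) xs x y))
  (* x_t = argmax of f~_t (any measurable maximizer selection) *)
  (xt : Omega -> X) (xt_max : forall w x, Ft w x <= Ft w (xt w))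
  (xt_meas : forall x, measurable [set w | xt w = x]) :
  ((p_const - 1 / (t%:R) ^+ 2)%:E <=
   P [set w | ~ (f xstar - f (xt w) >
                 c_t #|X| delta t * post_sd (ntk_emp g) (sigma ^+ 2) xs (xt w)
                 + 2 * eps_mt #|X| delta t T K0 L eps Bp sigma)%R])%E.
Proof.
set mu := post_mean (ntk_emp g) (sigma ^+ 2) xs ys.
set cv := post_cov (ntk_emp g) (sigma ^+ 2) xs.
set sd := post_sd (ntk_emp g) (sigma ^+ 2) xs.
set beta := beta_t #|X| delta t.
set em := eps_mt #|X| delta t T K0 L eps Bp sigma.
set T0 := [set w | ~ (f xstar - f (xt w) > c_t #|X| delta t * sd (xt w) + 2 * em)%R].
have cardX : (0 < #|X|)%N by apply/card_gt0P; exists xstar.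
have t1 : 1 <= t%:R :> R by rewrite ler1n.
have Xr1 : 1 <= #|X|%:R :> R by rewrite ler1n.
have tt1 : 1 <= t%:R ^+ 2 :> R by rewrite expr2; nra.
have beta0 : 0 <= beta.
  rewrite /beta /beta_t; apply: mulr_ge0 => //; apply: ln_ge0.
  rewrite ler_pdivlMr ?mul1r; last by rewrite mulr_gt0.
  have pi2 : 4 <= pi ^+ 2 :> R by have := pi_ge2 R; rewrite expr2 => ?; nra.
  have h1 : 4 <= pi ^+ 2 * t%:R ^+ 2 :> R by nra.
  have h2 : 4 <= pi ^+ 2 * t%:R ^+ 2 * #|X|%:R :> R by nra.
  rewrite -!mulrA; rewrite !mulrA in h2; nra.
set N : R := #|X|%:R * t%:R ^+ 2.
have N1 : 1 <= N by rewrite /N; nra.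
have N0 : 0 < N by lra.
set c' := Num.sqrt (2 * ln N).
have c'0 : 0 <= c' by apply: sqrtr_ge0.
have lnN0 : 0 <= ln N by apply: ln_ge0.
have eN : expR (- c' ^+ 2 / 2) = N^-1.
  rewrite /c' sqr_sqrtr; last by rewrite mulr_ge0.
  rewrite (_ : - (2 * ln N) / 2 = - ln N); last by field.
  by rewrite expRN lnK // posrE.
have law : forall r x, is_normal_rv P (fun w => r * Ft w x) (r * mu x) (r ^+ 2 * (beta ^+ 2 * cv x x)).
  by move=> r x; exact: (@gp_marg R X dO Omega P Ft _ _ Ft_law r x).
have law1 : forall x, is_normal_rv P (fun w => Ft w x) (mu x) (beta ^+ 2 * cv x x).
  move=> x; have := law 1 x.
  have -> : (fun w => 1 * Ft w x) = (fun w => Ft w x) by apply: funext => w; rewrite mul1r.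
  by rewrite expr1n !mul1r.
have vge0 : forall x, 0 <= beta ^+ 2 * cv x x.
  move=> x; apply: (normal_var_ge0 (law1 x)).
  have := law 2 x; rewrite (_ : (2:R) ^+ 2 = 4) //.
  by rewrite expr2; lra.
have sqv : forall x, Num.sqrt (beta ^+ 2 * cv x x) = beta * sd x.
  by move=> x; rewrite sqrtrM ?sqr_ge0 // sqrtr_sqr ger0_norm.
set A := [set w | (mu xstar + Num.sqrt (beta ^+ 2 * cv xstar xstar) <= Ft w xstar)%R].
have pA : (p_const%:E <= P A)%E by apply: normal_lower (law1 xstar) (vge0 xstar).
set Bs := fun x => [set w | (mu x + c' * Num.sqrt (beta ^+ 2 * cv x x) < Ft w x)%R].
have pB : forall x, (P (Bs x) <= (N^-1)%:E)%E.
  by move=> x; rewrite -eN; apply: normal_upper_tail (law1 x) (vge0 x) c'0.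
have mFt : forall x, measurable_fun setT (fun w => Ft w x) by move=> x; case: (law1 x).
have mpre : forall x (i : interval R), measurable ((fun w => Ft w x) @^-1` [set` i]).
  by move=> x i; have := mFt x measurableT _ (measurable_itv i); rewrite setTI.
have mA : measurable A.
  have -> : A = (fun w => Ft w xstar) @^-1` `[(mu xstar + Num.sqrt (beta ^+ 2 * cv xstar xstar))%R, +oo[%classic.
    by apply/seteqP; split => w /=; rewrite in_itv /= andbT.
  exact: mpre.
have mB : forall x, measurable (Bs x).
  move=> x; have -> : Bs x = (fun w => Ft w x) @^-1` `](mu x + c' * Num.sqrt (beta ^+ 2 * cv x x))%R, +oo[%classic.
    by apply/seteqP; split => w /=; rewrite in_itv /= andbT.
  exact: mpre.
set U := \big[setU/set0]_(x <- enum X) Bs x.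
have mU : measurable U by apply: bigsetU_measurable.
have pU : (P U <= (t%:R ^+ 2)^-1%:E)%E.
  apply: le_trans (measure_bigU_le mB) _.
  apply: (@le_trans _ _ (\sum_(x <- enum X) (N^-1)%:E)%E); first by apply: lee_sum => x _; exact: pB.
  rewrite sumEFin lee_fin big_const_seq count_predT -cardE iter_addr_0.
  rewrite -[N^-1 *+ _]mulr_natl /N invfM mulrA mulfV ?mul1r // pnatr_eq0 -lt0n //.
have ect : c_t #|X| delta t = beta * (1 + c') by [].
have incl : A `\` U `<=` T0.
  move=> w [Aw nUw] /= H.
  have nB : ~ Bs (xt w) w.
    by move=> Bw; apply: nUw; apply/bigU_mem; exists (xt w); rewrite ?mem_enum.
  have nB' : Ft w (xt w) <= mu (xt w) + c' * (beta * sd (xt w)).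
    by rewrite leNgt -sqv; apply/negP.
  rewrite /A /= sqv in Aw.
  have := HE (xt w); rewrite ler_norml => /andP[h1 h1'].
  have := HE xstar; rewrite ler_norml => /andP[h2 h2'].
  have hm := xt_max w xstar.
  rewrite ect in H.
  have ex : beta * (1 + c') * sd (xt w) = beta * sd (xt w) + c' * (beta * sd (xt w)) by ring.
  rewrite -/mu -/sd -/beta -/em in h1 h1' h2 h2'.
  lra.
have mT : measurable T0.
  have -> : T0 = \big[setU/set0]_(x <- enum X)
      (if ~~ (c_t #|X| delta t * sd x + 2 * em < f xstar - f x) then [set w | xt w = x] else set0).
    apply/seteqP; split => w.
      move=> /= h; apply/bigU_mem; exists (xt w); first by rewrite mem_enum.
      by rewrite ifT //; apply/negP.
    move/bigU_mem => [x _]; case: ifP => // /negP h /= e.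
    by rewrite /T0 /= e.
  by apply: bigsetU_measurable => x _; case: ifP => _ //; exact: xt_meas.
have h1 : (P A <= P (A `\` U) + P U)%E.
  apply: le_trans (measureU2 _ _ _); [|exact: measurableD|exact: mU].
  apply: le_measure; rewrite ?inE; [exact: mA|apply: measurableU; [exact: measurableD|exact: mU]|].
  by move=> w Aw; case: (pselect (U w)) => h; [right|left].
have h2 : (P (A `\` U) <= P T0)%E.
  by apply: le_measure; rewrite ?inE //; exact: measurableD.
rewrite EFinB leeBlDr // div1r.
apply: le_trans pA _; apply: le_trans h1 _; exact: leeD.
Qed.
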